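(* Let $A$ and $B$ be $J^*$-algebras. Suppose that $h : A \to B$ is a mapping with $h(0)=0$ for which there exists a function $\varphi: A\times A\times A\to [0, \infty)$ such that $$\widetilde{\varphi}(x, y, z):=\frac{1}{2}\sum_{n=0}^\infty 2^{-n}\varphi(2^nx,2^ny,2^nz)<\infty\quad\text{for all } x,y,z\in A,$$ and $$\|h(\mu x+\mu y+zz^*z)-\mu h(x)-\mu h(y)-h(z)h(z)^*h(z)\|\leq \varphi(x,y,z)$$ for $\mu\in\{1,i\}$ and all $x, y, z\in A$. If for each fixed $x\in A$ the function $\mathbb{R}\ni t\mapsto h(tx)\in B$ is continuous, then there exists a unique $J^*$-homomorphism $T : A \to B$ such that $$\|h(x)-T(x)\|\leq\widetilde{\varphi}(x, x, 0)\quad\text{for all } x\in A.$$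
   Context: A $J^*$-algebra is a norm-closed complex linear subspace $A$ of a $C^*$-algebra such that $xx^*x\in A$ whenever $x\in A$ (with the norm, involution and product inherited from the ambient $C^*$-algebra). For $J^*$-algebras $A$ and $B$, a $J^*$-homomorphism is a $\mathbb{C}$-linear mapping $T : A \to B$ such that $T(xx^*x)=T(x)T(x)^*T(x)$ for all $x\in A$. *)

(* Defs.v *)
From HB Require Import structures.
From mathcomp Require Import all_boot all_order all_algebra.
From mathcomp Require Import all_classical all_reals all_analysis.
From mathcomp Require Import complex.
Set Implicit Arguments. Unset Strict Implicit. Unset Printing Implicit Defensive.
Import Order.TTheory GRing.Theory Num.Theory.
Import numFieldNormedType.Exports.
Local Open Scope ring_scope.
Local Open Scope classical_set_scope.

Record CStarAlgebra (R : realType) (V : completeNormedModType R[i]) := {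
  cmul : V -> V -> V;
  cstar : V -> V;
  cmulDl : forall x y z, cmul (x + y) z = cmul x z + cmul y z;
  cmulDr : forall x y z, cmul x (y + z) = cmul x y + cmul x z;
  cmulZl : forall (a : R[i]) x y, cmul (a *: x) y = a *: cmul x y;
  cmulZr : forall (a : R[i]) x y, cmul x (a *: y) = a *: cmul x y;
  cmulA : forall x y z, cmul x (cmul y z) = cmul (cmul x y) z;
  cstarD : forall x y, cstar (x + y) = cstar x + cstar y;
  cstarZ : forall (a : R[i]) x, cstar (a *: x) = a^* *: cstar x;
  cstarK : forall x, cstar (cstar x) = x;
  cstarM : forall x y, cstar (cmul x y) = cmul (cstar y) (cstar x);
  cnormM : forall x y, `|cmul x y| <= `|x| * `|y|;
  cnorm_cstar : forall x, `|cmul (cstar x) x| = `|x| ^+ 2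
}.

Definition triple (R : realType) (V : completeNormedModType R[i])
  (S : CStarAlgebra V) (x : V) : V := cmul S (cmul S x (cstar S x)) x.

Definition is_Jstar_algebra (R : realType) (V : completeNormedModType R[i])
  (S : CStarAlgebra V) (A : set V) : Prop :=
  [/\ A 0,
      (forall (a : R[i]) x y, A x -> A y -> A (a *: x + y)),
      closed A &
      (forall x, A x -> A (triple S x))].

(* A J*-homomorphism T : A -> B (only its values on A matter). *)
Definition is_Jstar_hom (R : realType)
  (V1 V2 : completeNormedModType R[i])
  (S1 : CStarAlgebra V1) (A : set V1) (S2 : CStarAlgebra V2) (B : set V2)
  (T : V1 -> V2) : Prop :=
  [/\ (forall x, A x -> B (T x)),
      (forall (a : R[i]) x y, A x -> A y -> T (a *: x + y) = a *: T x + T y) &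
      (forall x, A x -> T (triple S1 x) = triple S2 (T x))].

Definition phi_term (R : realType) (V : completeNormedModType R[i])
  (phi : V -> V -> V -> R) (x y z : V) (n : nat) : R :=
  (2 ^+ n)^-1 * phi ((2 ^+ n : R[i]) *: x) ((2 ^+ n : R[i]) *: y)
                    ((2 ^+ n : R[i]) *: z).

Definition phi_tilde (R : realType) (V : completeNormedModType R[i])
  (phi : V -> V -> V -> R) (x y z : V) : R :=
  2^-1 * limn (series (phi_term phi x y z)).

(* Main.v *)
Require Import Defs.
From HB Require Import structures.
From mathcomp Require Import all_boot all_order all_algebra.
From mathcomp Require Import all_classical all_reals all_analysis.
From mathcomp Require Import complex.
From mathcomp Require Import ring.
Import Order.TTheory GRing.Theory Num.Theory.
Import numFieldNormedType.Exports.
Local Open Scope ring_scope.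
Local Open Scope classical_set_scope.

Module JH.
Set Implicit Arguments. Unset Strict Implicit. Unset Printing Implicit Defensive.
Section NR.
Variable R : realType.
Variable V : normedModType R[i].
Definition nr (v : V) : R := complex.Re `|v|.
Lemma nrE v : `|v| = (nr v)%:C%C.
Proof. by rewrite /nr RRe_real. Qed.
Lemma nr_ge0 v : 0 <= nr v.
Proof. by have := normr_ge0 v; rewrite nrE ler0c. Qed.
Lemma nrD u v : nr (u + v) <= nr u + nr v.
Proof. by rewrite -(@lecR R) raddfD /= -!nrE ler_normD. Qed.
Lemma nrN v : nr (- v) = nr v.
Proof. by rewrite /nr normrN. Qed.
Lemma nrB u v : nr (u - v) = nr (v - u).
Proof. by rewrite -nrN opprB. Qed.
Lemma nr0 : nr 0 = 0.
Proof. by rewrite /nr normr0. Qed.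
Lemma nr_eq0 v : nr v = 0 -> v = 0.
Proof. by move=> h; apply/eqP; rewrite -normr_eq0 nrE h. Qed.
Lemma nrZ (a : R[i]) v : nr (a *: v) = complex.Re `|a| * nr v.
Proof. by rewrite /nr normrZ [`|v|]nrE /= mulr0 subr0. Qed.
Lemma normcR (t : R) : complex.Re `|t%:C%C| = `|t|.
Proof. by rewrite normc_def /= expr0n /= addr0 sqrtr_sqr. Qed.
Lemma nrZR (t : R) v : nr (t%:C%C *: v) = `|t| * nr v.
Proof. by rewrite nrZ normcR. Qed.
Lemma nr_le (v : V) (c : R) : (`|v| <= c%:C%C) = (nr v <= c).
Proof. by rewrite nrE lecR. Qed.
Lemma nr_lt (v : V) (c : R) : (`|v| < c%:C%C) = (nr v < c).
Proof. by rewrite nrE ltcR. Qed.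

Lemma cvg_nrP (u : nat -> V) l :
  u @ \oo --> l <-> (fun n => nr (u n - l)) @ \oo --> (0:R).
Proof.
split.
- move=> /(cvgrPdist_lt _ _) H; apply/(cvgrPdist_lt _ _) => e e0.
  have e0' : 0 < e%:C%C :> R[i] by rewrite ltcR.
  move: (H _ e0'); apply: filterS => n.
  by rewrite sub0r normrN ger0_norm ?nr_ge0 // nrB -nr_lt.
- move=> /(cvgrPdist_lt _ _) H; apply/(cvgrPdist_lt _ _) => e e0.
  have e0' : 0 < complex.Re e.
    by move: e0; rewrite ltcE /= => /andP[].
  move: (H _ e0'); apply: filterS => n.
  rewrite sub0r normrN ger0_norm ?nr_ge0 // nrB -nr_lt.
  suff -> : ((complex.Re e)%:C)%C = e by [].
  by rewrite RRe_real // gtr0_real.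
Qed.
Lemma nr_lip (a b : V) : `|nr a - nr b| <= nr (a - b).
Proof.
have h1 (p q : V) : nr p - nr q <= nr (p - q).
  by rewrite lerBlDr; have := nrD (p - q) q; rewrite subrK.
rewrite ler_norml h1 andbT lerNl opprB nrB; exact: h1.
Qed.
Lemma nr_cont : continuous (nr : V -> R).
Proof.
move=> v; apply/(cvgrPdist_lt _ _) => e e0.
have e0' : 0 < e%:C%C :> R[i] by rewrite ltcR.
have H := (@cvgrPdist_lt _ _ _ (nbhs v) _ id v).1 cvg_id _ e0'.
near=> y.
have hy : `|v - y| < e%:C%C by near: y; exact: H.
move: hy; rewrite nr_lt => hy.
exact: le_lt_trans (nr_lip _ _) hy.
Unshelve. all: by end_near.
Qed.
Lemma mc (k : R) : continuous (fun t : R => k * t).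
Proof. exact: (@scaler_continuous R R^o k). Qed.
End NR.
Section CV.
Variable R : realType.
Variable V : completeNormedModType R[i].
Implicit Types (u w : nat -> V).

Lemma cvg0_nr w (s : nat -> R) :
  (forall n, nr (w n) <= s n) -> s @ \oo --> (0:R) -> w @ \oo --> (0:V).
Proof.
move=> hs s0; apply/cvg_nrP.
apply: (@squeeze_cvgr _ _ _ _ (fun=> 0) s) => //; last exact: cvg_cst.
by apply: nearW => n /=; rewrite subr0 nr_ge0 hs.
Qed.

Lemma cvg_eq u (a b : V) : u @ \oo --> a -> u @ \oo --> b -> a = b.
Proof. move=> Ha Hb. exact: (@cvg_unique V (@norm_hausdorff _ V) (u @ \oo) _ a b Ha Hb). Qed.

Lemma le_of_lim0 (x : R) (w : nat -> R) : w @ \oo --> (0:R) ->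
  (forall n, x <= w n) -> x <= 0.
Proof.
move=> w0 hx.
have <- : lim (w @ \oo) = 0 by exact: cvg_lim.
apply: limr_ge; first by apply/cvg_ex; exists 0.
exact: nearW.
Qed.

Lemma tele u (t : nat -> R) : (forall n, 0 <= t n) -> cvgn (series t) ->
  (forall n, nr (u n - u n.+1) <= t n) ->
  exists l, u @ \oo --> l /\ nr (u 0%N - l) <= limn (series t).
Proof.
move=> t0 ct hu.
have H1 n k : nr (u n - u (n + k)%N) <= series t (n + k)%N - series t n.
  elim: k => [|k IH]; first by rewrite addn0 !subrr nr0.
  rewrite addnS seriesSr.
  have -> : u n - u (n + k).+1 = (u n - u (n + k)%N) + (u (n+k)%N - u (n + k).+1).
    by rewrite addrA subrK.
  apply: (le_trans (nrD _ _)).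
  have := hu (n + k)%N; move: IH.
  set a := nr _; set b := nr _ => h1 h2.
  by rewrite addrAC; apply: lerD.
have ndec : {homo series t : n m / (n <= m)%N >-> n <= m}.
  move=> n m /subnKC <-; elim: (m - n)%N => [|k IH]; first by rewrite addn0.
  by rewrite addnS seriesSr (le_trans IH) // lerDl.
have Sle := nondecreasing_cvgn_le ndec ct.
set S := limn (series t) in Sle *.
have sS : series t @ \oo --> S by [].
have cu : cvgn u.
  apply: cauchy_cvg; apply: cauchy_exP => e e0.
  have e0' : 0 < complex.Re e by move: e0; rewrite ltcE /= => /andP[].
  have [N _ HN] : \forall n \near \oo, `|S - series t n| < complex.Re e.
    by move/(cvgrPdist_lt _ _): sS; apply.
  exists (u N); exists N => // m /= Nm.
  rewrite -ball_normE /ball_ /=.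
  have -> : e = ((complex.Re e)%:C)%C by rewrite RRe_real // gtr0_real.
  rewrite nr_lt; have /subnKC <- := Nm.
  apply: (le_lt_trans (H1 _ _)).
  have := HN N (leqnn N); rewrite ger0_norm ?subr_ge0 // => hh.
  by apply: le_lt_trans hh; rewrite lerD2r.
have [l ul] := (cvg_ex (u @ \oo)).1 cu.
exists l; split => //.
have /cvg_nrP ul' := ul.
rewrite -subr_le0.
apply: (le_of_lim0 ul') => n.
rewrite lerBlDr (le_trans (y := nr (u 0%N - u n) + nr (u n - l))) //.
  by rewrite (_ : u 0%N - l = (u 0%N - u n) + (u n - l)) ?nrD // addrA subrK.
rewrite addrC lerD2l; have := H1 0%N n; rewrite add0n => h.
apply: (le_trans h); rewrite [series t 0%N]/series /= big_geq // subr0; exact: Sle.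
Qed.

Lemma cvg_sub w (l : V) (f : nat -> nat) : (forall n, (n <= f n)%N) ->
  w @ \oo --> l -> (fun n => w (f n)) @ \oo --> l.
Proof.
move=> hf /(cvgrPdist_lt _ _) H; apply/(cvgrPdist_lt _ _) => e e0.
have [N _ HN] := H e e0; exists N => // n /= hn; apply: HN.
exact: leq_trans hn (hf n).
Qed.

Lemma le_of_lim0n (x : R) (w : nat -> R) : w @ \oo --> (0:R) ->
  (\forall n \near \oo, x <= w n) -> x <= 0.
Proof.
move=> w0 hx.
have <- : lim (w @ \oo) = 0 by exact: cvg_lim.
apply: limr_ge => //; by apply/cvg_ex; exists 0.
Qed.
End CV.
Section Trip.
Variable R : realType.
Variable V : completeNormedModType R[i].
Variable S : CStarAlgebra V.

Lemma tripleZR (t : R) v : triple S (t%:C%C *: v) = ((t ^+ 3)%:C)%C *: triple S v.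
Proof.
have tr : (t%:C%C : R[i]) \is Num.real by apply/complex_realP; exists t.
rewrite /triple cstarZ (conj_Creal tr) !cmulZl !cmulZr !scalerA.
by rewrite cmulZl scalerA rmorphXn /= !exprS expr0 mulr1 mulrA.
Qed.

Lemma nr_cmul a b : nr (cmul S a b) <= nr a * nr b.
Proof. by rewrite -nr_le rmorphM /= -!nrE; exact: cnormM. Qed.

Lemma nr_cstar_sq v : nr (cmul S (cstar S v) v) = nr v ^+ 2.
Proof.
apply: (@complexI R); rewrite -nrE rmorphXn /= -nrE; exact: cnorm_cstar.
Qed.

Lemma nr_cstar_ge v : nr v <= nr (cstar S v).
Proof.
have [->|v0] := eqVneq (nr v) 0; first exact: nr_ge0.
have vp : 0 < nr v by rewrite lt_def v0 nr_ge0.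
have := nr_cmul (cstar S v) v; rewrite nr_cstar_sq expr2 ler_pM2r //.
Qed.

Lemma nr_cstar v : nr (cstar S v) = nr v.
Proof.
apply/le_anti; rewrite nr_cstar_ge andbT.
by have := nr_cstar_ge (cstar S v); rewrite cstarK.
Qed.

Lemma cstarN v : cstar S (- v) = - cstar S v.
Proof.
have -> : - v = (-1 : R[i]) *: v by rewrite scaleN1r.
by rewrite cstarZ rmorphN1 scaleN1r.
Qed.

Lemma cstarB a b : cstar S (a - b) = cstar S a - cstar S b.
Proof. by rewrite cstarD cstarN. Qed.

Lemma cmulBl a b z : cmul S (a - b) z = cmul S a z - cmul S b z.
Proof.
by rewrite cmulDl -scaleN1r cmulZl scaleN1r.
Qed.

Lemma cmulBr z a b : cmul S z (a - b) = cmul S z a - cmul S z b.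
Proof.
by rewrite cmulDr -scaleN1r cmulZr scaleN1r.
Qed.

Lemma triple_diff a b : nr (triple S a - triple S b) <=
  nr (a - b) * (nr a ^+ 2 + nr b * nr a + nr b ^+ 2).
Proof.
have -> : triple S a - triple S b =
  cmul S (cmul S (a - b) (cstar S a)) a + cmul S (cmul S b (cstar S (a - b))) a
  + cmul S (cmul S b (cstar S b)) (a - b).
  rewrite cstarB !cmulBl !cmulBr /triple.
  by rewrite cmulBl !addrA !subrK.
have h3 p q r : nr (cmul S (cmul S p q) r) <= nr p * nr q * nr r.
  apply: (le_trans (nr_cmul _ _)); apply: ler_wpM2r; first exact: nr_ge0.
  exact: nr_cmul.
rewrite !mulrDr; apply: (le_trans (nrD _ _)); apply: lerD; last first.
  by apply: (le_trans (h3 _ _ _)); rewrite nr_cstar expr2 mulrC mulrA.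
apply: (le_trans (nrD _ _)); apply: lerD.
  by apply: (le_trans (h3 _ _ _)); rewrite nr_cstar expr2 mulrA.
apply: (le_trans (h3 _ _ _)); rewrite nr_cstar.
by rewrite [nr b * _]mulrC -mulrA.
Qed.

Lemma triple_cvg (w : nat -> V) (l : V) :
  w @ \oo --> l -> (fun n => triple S (w n)) @ \oo --> triple S l.
Proof.
move=> wl; apply/cvg_nrP.
have /cvg_nrP w0 := wl.
have wn : (fun n => nr (w n)) @ \oo --> nr l.
  apply: (cvg_comp _ _ wl); exact: nr_cont.
pose s n := nr (w n - l) * (nr (w n) ^+ 2 + nr l * nr (w n) + nr l ^+ 2).
have s0 : s @ \oo --> (0:R).
  rewrite -(mul0r (nr l ^+ 2 + nr l * nr l + nr l ^+ 2)).
  apply: cvgM => //; apply: cvgD; [apply: cvgD|exact: cvg_cst].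
    have -> : (fun n => nr (w n) ^+ 2) = (fun n => nr (w n) * nr (w n)).
      by apply/funext => n; rewrite expr2.
    by rewrite expr2; apply: cvgM.
  apply: cvgM => //; exact: cvg_cst.
apply: (@squeeze_cvgr _ _ _ _ (fun=> 0) s) => //; last exact: cvg_cst.
by apply: nearW => n /=; rewrite nr_ge0 triple_diff.
Qed.
End Trip.
Section Main.
Variable R : realType.
Variables (V1 V2 : completeNormedModType R[i]).
Variables (S1 : CStarAlgebra V1) (S2 : CStarAlgebra V2).
Variables (A : set V1) (B : set V2).
Hypotheses (hA : is_Jstar_algebra S1 A) (hB : is_Jstar_algebra S2 B).
Variable h : V1 -> V2.
Hypotheses (hAB : forall x, A x -> B (h x)) (h0 : h 0 = 0).
Variable phi : V1 -> V1 -> V1 -> R.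
Hypothesis phi_ge0 : forall x y z, A x -> A y -> A z -> 0 <= phi x y z.
Hypothesis phi_fin : forall x y z, A x -> A y -> A z ->
     cvgn (series (phi_term phi x y z)).
Hypothesis hphi : forall (mu : R[i]), mu = 1 \/ mu = ('i)%C ->
     forall x y z, A x -> A y -> A z ->
     `|h (mu *: x + mu *: y + triple S1 z) - mu *: h x - mu *: h y
        - triple S2 (h z)| <= ((phi x y z)%:C)%C.
Hypothesis hcont : forall x, A x -> continuous (fun t : R => h ((t%:C)%C *: x)).

Lemma cX (n : nat) : (2 ^+ n : R[i]) = ((2 ^+ n : R))%:C%C.
Proof. by rewrite rmorphXn rmorph_nat. Qed.
Lemma cV (t : R) : ((t^-1)%:C)%C = (t%:C%C)^-1.
Proof. by rewrite fmorphV. Qed.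

Lemma A0 : A 0. Proof. by case: hA. Qed.
Lemma AZ a x : A x -> A (a *: x).
Proof. by case: hA => _ hl _ _ Ax; have := hl a x 0 Ax A0; rewrite addr0. Qed.
Lemma AD x y : A x -> A y -> A (x + y).
Proof. by case: hA => _ hl _ _ Ax Ay; have := hl 1 x y Ax Ay; rewrite scale1r. Qed.
Lemma AT x : A x -> A (triple S1 x). Proof. by case: hA => _ _ _ H; apply: H. Qed.

Lemma triple0 (V : completeNormedModType R[i]) (S : CStarAlgebra V) :
  triple S 0 = 0.
Proof.
have cm0 y : cmul S 0 y = 0.
  by rewrite -[X in cmul S X](scale0r (0:V)) cmulZl scale0r.
by rewrite /triple !cm0.
Qed.

Lemma Hmu mu : mu = 1 \/ mu = ('i)%C -> forall w, A w ->
  nr (h (mu *: w + mu *: w) - (mu *: h w + mu *: h w)) <= phi w w 0.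
Proof.
move=> hmu w Aw; rewrite -nr_le.
have := hphi hmu Aw Aw A0.
by rewrite !triple0 h0 triple0 !addr0 subr0 opprD addrA.
Qed.

Lemma Hadd x y : A x -> A y -> nr (h (x + y) - h x - h y) <= phi x y 0.
Proof.
move=> Ax Ay; rewrite -nr_le.
have := hphi (or_introl erefl) Ax Ay A0.
by rewrite !triple0 h0 triple0 !scale1r !addr0 subr0.
Qed.

Lemma Htrip z : A z -> nr (h (triple S1 z) - triple S2 (h z)) <= phi 0 0 z.
Proof.
move=> Az; rewrite -nr_le.
have := hphi (or_introl erefl) A0 A0 Az.
by rewrite !scale1r h0 !addr0 add0r !subr0.
Qed.

Definition c (n : nat) : R[i] := 2 ^+ n.
Definition u x n := (c n)^-1 *: h (c n *: x).
Definition T x := lim (u x @ \oo).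

Lemma seriesM (k : R) (t : nat -> R) :
  series (fun n => k * t n) = (fun n => k * series t n).
Proof. by apply/funext => n; rewrite /series /= big_distrr. Qed.

Lemma phi_term_ge0 x y z n : A x -> A y -> A z -> 0 <= phi_term phi x y z n.
Proof.
move=> Ax Ay Az; rewrite /phi_term mulr_ge0 // ?invr_ge0 ?exprn_ge0 //.
by apply: phi_ge0; apply: AZ.
Qed.

Lemma Texist x : A x -> u x @ \oo --> T x /\
  nr (h x - T x) <= 2^-1 * limn (series (phi_term phi x x 0)).
Proof.
move=> Ax.
set t := fun n => 2^-1 * phi_term phi x x 0 n.
have ct := phi_fin Ax Ax A0.
have ct' : series t @ \oo --> 2^-1 * limn (series (phi_term phi x x 0)).
  rewrite /t seriesM; apply: cvgM => //; exact: cvg_cst.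
have [l [ul bl]] : exists l, u x @ \oo --> l /\ nr (u x 0%N - l) <= limn (series t).
  apply: tele.
  - by move=> n; rewrite /t mulr_ge0 ?invr_ge0 // phi_term_ge0 //; exact: A0.
  - by apply/cvg_ex; eexists; exact: ct'.
  - move=> n; rewrite /u /t /phi_term scaler0.
    set w := c n *: x.
    have Aw : A w by apply: AZ.
    have e1 : c n.+1 *: x = 1 *: w + 1 *: w.
      by rewrite /w !scale1r -scalerDl /c exprS -[2]/(1 + 1 : R[i]) mulrDl mul1r.
    rewrite e1.
    have -> : (c n)^-1 *: h w - (c n.+1)^-1 *: h (1 *: w + 1 *: w) =
      - ((c n.+1)^-1 *: (h (1 *: w + 1 *: w) - (1 *: h w + 1 *: h w))).
      rewrite scalerBr opprB; congr (_ - _).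
      rewrite !scale1r -mulr2n -scaler_nat scalerA; congr (_ *: _).
      by rewrite /c exprS invfM mulrAC mulVf ?mul1r.
    rewrite nrN /c cX -cV nrZR.
    rewrite ger0_norm ?invr_ge0 ?exprn_ge0 // exprS invfM -mulrA ler_wpM2l //.
    apply: ler_wpM2l; first by rewrite invr_ge0 exprn_ge0.
    exact: (Hmu (or_introl erefl) Aw).
have uT : u x @ \oo --> T x by rewrite /T (cvg_lim (@norm_hausdorff _ V2) ul).
split => //.
have -> : T x = l by rewrite /T (cvg_lim (@norm_hausdorff _ V2) ul).
move: bl; rewrite (cvg_lim (@Rhausdorff R) ct') /u /c expr0 invr1 !scale1r.
done.
Qed.

Lemma lim_close (u1 u2 : nat -> V2) (a b : V2) (s : nat -> R) :
  u1 @ \oo --> a -> u2 @ \oo --> b ->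
  (forall n, nr (u1 n - u2 n) <= s n) -> s @ \oo --> (0:R) -> a = b.
Proof.
move=> ha hb hs s0; apply/eqP; rewrite -subr_eq0; apply/eqP.
apply: (@cvg_eq _ _ (fun n => u1 n - u2 n)).
  exact: cvgB.
exact: cvg0_nr hs s0.
Qed.

Lemma nr_cinv n (v : V2) : nr ((c n)^-1 *: v) = (2 ^+ n)^-1 * nr v.
Proof.
by rewrite /c cX -cV nrZR ger0_norm // invr_ge0 exprn_ge0.
Qed.

Lemma phi_term0 x y : A x -> A y -> phi_term phi x y 0 @ \oo --> (0:R).
Proof. by move=> Ax Ay; apply: cvg_series_cvg_0; apply: phi_fin => //; exact: A0. Qed.

Lemma Tadd x y : A x -> A y -> T (x + y) = T x + T y.
Proof.
move=> Ax Ay.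
apply: (@lim_close (u (x + y)) (fun n => u x n + u y n) _ _ (phi_term phi x y 0)).
- exact: (Texist (AD Ax Ay)).1.
- by apply: cvgD; [exact: (Texist Ax).1 | exact: (Texist Ay).1].
- move=> n; rewrite /u -scalerDr -scalerBr nr_cinv /phi_term scaler0 scalerDr.
  apply: ler_wpM2l; first by rewrite invr_ge0 exprn_ge0.
  by rewrite opprD addrA; apply: Hadd; apply: AZ.
- exact: phi_term0.
Qed.

Lemma Ti x : A x -> T ('i%C *: x) = 'i%C *: T x.
Proof.
move=> Ax.
apply: (@lim_close (fun n => u ('i%C *: x) n.+1) (fun n => 'i%C *: u x n) _ _
   (phi_term phi x x 0)).
- by rewrite cvg_shiftS; exact: (Texist (AZ _ Ax)).1.
- by apply: cvgZ; [exact: cvg_cst | exact: (Texist Ax).1].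
- move=> n; rewrite /u.
  set w := c n *: x.
  have Aw : A w by apply: AZ.
  have e1 : c n.+1 *: ('i%C *: x) = 'i%C *: w + 'i%C *: w.
    rewrite /w scalerA -scalerDl scalerA; congr (_ *: _).
    by rewrite /c exprS; ring.
  have e2 : 'i%C *: ((c n)^-1 *: h w) = (c n.+1)^-1 *: ('i%C *: h w + 'i%C *: h w).
    rewrite -mulr2n -scaler_nat !scalerA; congr (_ *: _).
    rewrite /c exprS; field.
    by rewrite expf_neq0 // pnatr_eq0.
  rewrite e1 e2 -scalerBr nr_cinv /phi_term scaler0.
  apply: (le_trans (y := (2^+n.+1)^-1 * phi w w 0)).
    apply: ler_wpM2l; first by rewrite invr_ge0 exprn_ge0.
    exact: (Hmu (or_intror erefl) Aw).
  apply: ler_wpM2r; first by apply: phi_ge0 => //; exact: A0.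
  by rewrite exprS invfM ler_piMl ?invr_ge0 ?exprn_ge0 // invf_le1 // ler1n.
- exact: phi_term0.
Qed.

Lemma T0 : T 0 = 0.
Proof.
have := Tadd A0 A0; rewrite addr0 => /(congr1 (fun v => v - T 0)).
by rewrite subrr addrK.
Qed.

Definition d x (t : R) := T (t%:C%C *: x) - t%:C%C *: T x.

Lemma dD x s t : A x -> d x (s + t) = d x s + d x t.
Proof.
move=> Ax; rewrite /d rmorphD /= !scalerDl Tadd; try exact: AZ.
by rewrite opprD addrACA.
Qed.

Lemma d0 x : d x 0 = 0.
Proof. by rewrite /d rmorph0 !scale0r T0 subrr. Qed.

Lemma d1 x : d x 1 = 0.
Proof. by rewrite /d rmorph1 !scale1r subrr. Qed.

Lemma dN x t : A x -> d x (- t) = - d x t.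
Proof.
move=> Ax; have := dD (- t) t Ax; rewrite addNr d0 => /eqP.
by rewrite eq_sym addr_eq0 => /eqP.
Qed.

Lemma dMn x t k : A x -> d x (t *+ k) = d x t *+ k.
Proof.
move=> Ax; elim: k => [|k IH]; first by rewrite !mulr0n d0.
by rewrite !mulrS dD // IH.
Qed.

Lemma dint x (k : int) : A x -> d x k%:~R = 0.
Proof.
move=> Ax; case: k => n.
  by rewrite -[(Posz n)%:~R]/(1 *+ n) dMn // d1 mul0rn.
by rewrite NegzE mulrNz dN // -[(Posz n.+1)%:~R]/(1 *+ n.+1) dMn // d1 mul0rn oppr0.
Qed.

Definition g x n (t : R) := u (t%:C%C *: x) n.

Lemma g_eq x n t : g x n t = (c n)^-1 *: h (((2 ^+ n * t)%:C)%C *: x).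
Proof. by rewrite /g /u scalerA /c cX rmorphM. Qed.

Lemma g_cont x n : A x -> continuous (g x n).
Proof.
move=> Ax.
have -> : g x n = (fun v => (c n)^-1 *: v) \o (fun s : R => h (s%:C%C *: x))
   \o (fun t : R => 2 ^+ n * t).
  by apply/funext => t; rewrite g_eq.
move=> t; apply: continuous_comp; first exact: mc.
apply: continuous_comp; first exact: hcont.
exact: scaler_continuous.
Qed.

Lemma g_cvg x t : A x -> g x n t @[n --> \oo] --> T (t%:C%C *: x).
Proof. by move=> Ax; exact: (Texist (AZ _ Ax)).1. Qed.

Lemma bounded_near x : A x -> exists t0 r M, 0 < r /\
  forall t, `|t0 - t| < r -> nr (T (t%:C%C *: x)) <= M.
Proof.
move=> Ax.
pose G n t := nr (g x n t).
pose F (k : nat) := \bigcap_(n in [set n | (k <= n)%N]) (G n @^-1` [set r | r <= k%:R]).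
have Fcl k : closed (F k).
  apply: closed_bigI => n _; apply: (continuous_closedP _).1; last exact: closed_le.
  move=> t; have : {for t, continuous ((fun v : V2 => nr v) \o g x n)}; last by [].
  apply: continuous_comp; [exact: g_cont | exact: nr_cont].
have Fcov t : exists k, F k t.
  have := @g_cvg x t Ax; move/cvg_nrP/(cvgrPdist_lt _ _)/(_ 1 ltr01).
  move=> [N _ HN].
  exists (maxn N (Num.trunc (nr (T (t%:C%C *: x)) + 1)).+1) => n /= hn.
  rewrite /G.
  have := HN n (leq_trans (leq_maxl _ _) hn); rewrite sub0r normrN ger0_norm ?nr_ge0 // => h1.
  apply: (le_trans (y := nr (g x n t - T (t%:C%C *: x)) + nr (T (t%:C%C *: x)))).
    by have := nrD (g x n t - T (t%:C%C *: x)) (T (t%:C%C *: x)); rewrite subrK.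
  apply/ltW; apply: (lt_le_trans (y := 1 + nr (T (t%:C%C *: x)))).
    by rewrite ltrD2r.
  apply: (le_trans (ltW (truncnS_gt _))); rewrite addrC ler_nat.
  exact: leq_maxr.
have [k [D [[t0 Dt0] oD] DF]] : exists k, exists2 D : set R, D !=set0 /\ open D & D `<=` F k.
  have [//|hno] := pselect (exists k, exists2 D : set R, D !=set0 /\ open D & D `<=` F k).
  exfalso.
  have dO k : dense (~` F k).
    move=> D D0 oD.
    have [//|hn] := pselect (D `&` ~` F k !=set0).
    exfalso; apply: hno; exists k; exists D => // t Dt.
    apply: contrapT => nF; apply: hn; by exists t.
  have [a [_ Ia]] := @Baire _ _ (fun k => ~` F k)
    (fun k => conj (closed_openC (Fcl k)) (dO k)) setT (ex_intro _ 0 I) openT.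
  have [k Fk] := Fcov a.
  exact: (Ia k I Fk).
have : nbhs t0 D by apply: open_nbhs_nbhs.
move=> /nbhs_ballP [r r0 brD].
exists t0, r, k%:R; split => // t ht.
have Ft : F k t by apply/DF/brD; rewrite -ball_normE /ball_ /=.
rewrite -subr_le0.
have := @g_cvg x t Ax; move/cvg_nrP => hw.
apply: (le_of_lim0n hw); exists k => // n /= hn.
have := Ft n hn; rewrite /G /= => hG.
rewrite lerBlDr (le_trans (y := nr (T (t%:C%C *: x) - g x n t) + nr (g x n t))) //.
  by have := nrD (T (t%:C%C *: x) - g x n t) (g x n t); rewrite subrK.
by rewrite nrB lerD2l.
Qed.

Lemma nrMn (v : V2) k : nr (v *+ k) = nr v *+ k.
Proof.
by rewrite -scaler_nat -[(k%:R : R[i])](rmorph_nat (real_complex R)) nrZR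
  ger0_norm ?ler0n // mulr_natl.
Qed.

Lemma TR x t : A x -> T (t%:C%C *: x) = t%:C%C *: T x.
Proof.
move=> Ax; suff : d x t = 0 by move/eqP; rewrite subr_eq0 => /eqP.
have [t0 [r [M [r0 hb]]]] := bounded_near Ax.
set M1 := M + (`|t0| + r) * nr (T x).
have b1 s : `|t0 - s| < r -> nr (d x s) <= M1.
  move=> hs; rewrite /d (le_trans (nrD _ _)) // nrN nrZR lerD // ?hb //.
  apply: ler_wpM2r; first exact: nr_ge0.
  have : `|s| <= `|t0| + `|t0 - s|.
    by have := ler_normB t0 (t0 - s); rewrite subKr.
  move/le_trans; apply; rewrite lerD2l; exact: ltW.
have b2 s : 0 <= s < r -> nr (d x s) <= M1 + M1.
  move=> /andP[s0 sr].
  have -> : d x s = d x (t0 + s) - d x t0 by rewrite dD // addrC addKr.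
  rewrite (le_trans (nrD _ _)) // nrN lerD // b1 //.
    by rewrite opprD addNKr normrN ger0_norm.
  by rewrite subrr normr0.
pose m := (Num.trunc r^-1).+1.
have m0 : (0 < m%:R :> R) by rewrite ltr0n.
have b3 s : 0 <= s < 1 -> nr (d x s) <= (M1 + M1) *+ m.
  move=> /andP[s0 s1].
  have -> : d x s = d x (s / m%:R) *+ m.
    by rewrite -dMn //; congr (d x _); rewrite -[_ *+ m]mulr_natr divfK // gt_eqF.
  rewrite nrMn lerMn2r /= b2 //.
  rewrite divr_ge0 ?ler0n //=.
  rewrite ltr_pdivrMr //; apply: (lt_le_trans s1).
  rewrite -ler_pdivrMl // mulr1; exact/ltW/truncnS_gt.
have b4 s : nr (d x s) <= (M1 + M1) *+ m.
  have -> : d x s = d x (s - (Num.floor s)%:~R).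
    by rewrite dD // dN // dint // oppr0 addr0.
  apply: b3; have := floor_itv s; rewrite intrD => /andP[h1 h2].
  by rewrite subr_ge0 h1 /= ltrBlDl.
set B0 := (M1 + M1) *+ m in b4.
suff : nr (d x t) <= 0.
  by move=> hh; apply: nr_eq0; apply/le_anti; rewrite hh nr_ge0.
have hw : (fun n => B0 * harmonic n) @ \oo --> (0:R).
  rewrite -(mulr0 B0); apply: cvgM; [exact: cvg_cst | exact: cvg_harmonic].
apply: (le_of_lim0 hw) => n /=.
rewrite ler_pdivlMr ?ltr0n //.
have := b4 (t *+ n.+1); rewrite dMn // nrMn -mulr_natr.
by rewrite mul1r mulr_natr.
Qed.

Lemma TZ a x : A x -> T (a *: x) = a *: T x.
Proof.
move=> Ax; rewrite [a]complexE !scalerDl -!scalerA.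
rewrite Tadd; [|exact: AZ|by apply: AZ; apply: AZ].
by rewrite TR // Ti ?TR //; apply: AZ.
Qed.

Lemma Tlin a x y : A x -> A y -> T (a *: x + y) = a *: T x + T y.
Proof. by move=> Ax Ay; rewrite Tadd ?TZ //; exact: AZ. Qed.

Lemma B0 : B 0. Proof. by case: hB. Qed.
Lemma BZ a v : B v -> B (a *: v).
Proof. by case: hB => _ hl _ _ Bv; have := hl a v 0 Bv B0; rewrite addr0. Qed.

Lemma TB x : A x -> B (T x).
Proof.
move=> Ax; case: hB => _ _ Bcl _.
apply: (closed_cvg B Bcl _ _ (Texist Ax).1).
by apply: nearW => n; rewrite /u; apply: BZ; apply: hAB; apply: AZ.
Qed.

Lemma Ttrip x : A x -> T (triple S1 x) = triple S2 (T x).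
Proof.
move=> Ax.
apply: (@lim_close (fun n => u (triple S1 x) (3 * n)%N) (fun n => triple S2 (u x n))
  _ _ (phi_term phi 0 0 x)).
- apply: (@cvg_sub _ _ (u (triple S1 x))) => [n|]; first by rewrite leq_pmull.
  exact: (Texist (AT Ax)).1.
- exact: triple_cvg (Texist Ax).1.
- move=> n; rewrite /u /phi_term scaler0.
  set y : R := (2 ^+ n)^-1.
  set z := c n *: x.
  have Az : A z by apply: AZ.
  have e1 : c (3 * n)%N *: triple S1 x = triple S1 z.
    by rewrite /z /c [(2 ^+ n : R[i])]cX tripleZR cX mulnC exprM.
  have e2 : (c (3 * n)%N)^-1 = ((y ^+ 3)%:C)%C.
    by rewrite /c cX -cV mulnC exprM exprVn.
  have e3 : (c n)^-1 = (y%:C)%C by rewrite /c cX -cV.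
  rewrite e1 e2 e3 tripleZR -scalerBr nrZR ger0_norm ?exprn_ge0 ?invr_ge0 ?exprn_ge0 //.
  have y0 : 0 <= y by rewrite invr_ge0 exprn_ge0.
  have y1 : y <= 1 by rewrite invf_le1 ?exprn_ege1 ?exprn_gt0 // ler1n.
  apply: (le_trans (y := y ^+ 3 * phi 0 0 z)).
    by apply: ler_wpM2l; [exact: exprn_ge0 | exact: Htrip].
  apply: ler_wpM2r; first by apply: phi_ge0 => //; exact: A0.
  by rewrite exprS ler_piMr // exprn_ile1.
- exact: cvg_series_cvg_0 (phi_fin A0 A0 Ax).
Qed.

Lemma series_shift x n N : series (phi_term phi (c n *: x) (c n *: x) 0) N =
  2 ^+ n * (series (phi_term phi x x 0) (N + n)%N - series (phi_term phi x x 0) n).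
Proof.
elim: N => [|N IH].
  by rewrite add0n subrr mulr0 /series /= big_geq.
rewrite seriesSr IH addSn seriesSr addrAC [in RHS]mulrDr; congr (_ + _).
rewrite /phi_term !scaler0 !scalerA /c -exprD addnC.
rewrite mulrA; congr (_ * _).
by rewrite exprD invfM mulrA mulfV ?mul1r // expf_neq0.
Qed.

Lemma Tuniq T' : is_Jstar_hom S1 A S2 B T' ->
  (forall x, A x -> `|h x - T' x| <= ((phi_tilde phi x x 0)%:C)%C) ->
  forall x, A x -> T' x = T x.
Proof.
move=> [_ hl _] hb x Ax.
have T'0 : T' 0 = 0.
  have := hl 1 0 0 A0 A0; rewrite !scale1r !addr0 => /(congr1 (fun v => v - T' 0)).
  by rewrite subrr addrK.
have T'Z a v : A v -> T' (a *: v) = a *: T' v.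
  by move=> Av; have := hl a v 0 Av A0; rewrite !addr0 T'0 addr0.
set t := phi_term phi x x 0.
have ct := phi_fin Ax Ax A0.
set S := limn (series t).
have sS : series t @ \oo --> S by [].
apply/eqP; rewrite -subr_eq0; apply/eqP; apply: nr_eq0.
apply/le_anti; rewrite nr_ge0 andbT.
have hw : (fun n => S - series t n) @ \oo --> (0:R).
  by rewrite -(subrr S); apply: cvgB => //; exact: cvg_cst.
apply: (le_of_lim0 hw) => n.
set z := c n *: x.
have Az : A z by apply: AZ.
have ptz : phi_tilde phi z z 0 = 2^-1 * (2 ^+ n * (S - series t n)).
  rewrite /phi_tilde; congr (_ * _); apply: cvg_lim => //.
  have -> : series (phi_term phi z z 0) =
    (fun N => 2 ^+ n * (series t (N + n)%N - series t n)).
    by apply/funext => N; rewrite series_shift.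
  apply: cvgM; first exact: cvg_cst.
  apply: cvgB; last exact: cvg_cst.
  by rewrite (cvg_shiftn n (series t)).
have b1 : nr (T' z - T z) <= 2 ^+ n * (S - series t n).
  have := hb z Az; rewrite nr_le => hb1.
  have hb2 : nr (h z - T z) <= phi_tilde phi z z 0 := (Texist Az).2.
  apply: (le_trans (y := nr (T' z - h z) + nr (h z - T z))).
    by have := nrD (T' z - h z) (h z - T z); rewrite addrA subrK.
  rewrite nrB (le_trans (lerD hb1 hb2)) // ptz.
  set q := 2 ^+ n * _.
  by rewrite -mulrDl -div1r -splitr mul1r.
move: b1; rewrite /z T'Z // TZ // -scalerBr /c cX nrZR ger0_norm ?exprn_ge0 //.
by rewrite ler_pM2l // exprn_gt0.
Qed.
End Main.

End JH.
Import JH.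
Unset Implicit Arguments.
Theorem theorem2p5 (R : realType)
  (V1 V2 : completeNormedModType R[i])
  (S1 : CStarAlgebra V1) (S2 : CStarAlgebra V2)
  (A : set V1) (B : set V2)
  (hA : is_Jstar_algebra S1 A) (hB : is_Jstar_algebra S2 B)
  (h : V1 -> V2)
  (hAB : forall x, A x -> B (h x))
  (h0 : h 0 = 0)
  (phi : V1 -> V1 -> V1 -> R)
  (phi_ge0 : forall x y z, A x -> A y -> A z -> 0 <= phi x y z)
  (phi_fin : forall x y z, A x -> A y -> A z ->
     cvgn (series (phi_term phi x y z)))
  (hphi : forall (mu : R[i]), mu = 1 \/ mu = ('i)%C ->
     forall x y z, A x -> A y -> A z ->
     `|h (mu *: x + mu *: y + triple S1 z) - mu *: h x - mu *: h y
        - triple S2 (h z)| <= ((phi x y z)%:C)%C)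
  (hcont : forall x, A x -> continuous (fun t : R => h ((t%:C)%C *: x))) :
  exists T : V1 -> V2,
    (is_Jstar_hom S1 A S2 B T /\
     forall x, A x -> `|h x - T x| <= ((phi_tilde phi x x 0)%:C)%C) /\
    (forall T' : V1 -> V2,
       is_Jstar_hom S1 A S2 B T' /\
       (forall x, A x -> `|h x - T' x| <= ((phi_tilde phi x x 0)%:C)%C) ->
       forall x, A x -> T' x = T x).
Proof.
exists (T h); split; [split; [split|] |].
- by move=> x Ax; exact: (TB hA hB hAB h0 phi_ge0 phi_fin hphi Ax).
- by move=> a x y Ax Ay; exact: (Tlin hA h0 phi_ge0 phi_fin hphi hcont a Ax Ay).
- by move=> x Ax; exact: (Ttrip hA h0 phi_ge0 phi_fin hphi Ax).
- move=> x Ax; rewrite nr_le.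
  exact: (Texist hA h0 phi_ge0 phi_fin hphi Ax).2.
- move=> T' [hT' hb] x Ax.
  exact: (Tuniq hA h0 phi_ge0 phi_fin hphi hcont hT' hb Ax).
Qed.
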